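(* Let $t \geq 1$ and $k \geq 1$ be integers, and let $\mathcal{F}$ be a finite family of finite sets with $\alpha(\mathcal{F}) \geq t$. Let $\mathcal{A}_1, \dots, \mathcal{A}_k$ be cross-$t$-intersecting sub-families of $\mathcal{F}$ such that $\sum_{i=1}^k |\mathcal{A}_i|$ is maximum among all $k$-tuples of cross-$t$-intersecting sub-families of $\mathcal{F}$. Then: (i) $\sum_{i=1}^k |\mathcal{A}_i| = k\, l(\mathcal{F},t)$ if $k \geq \kappa(\mathcal{F},t)$; (ii) $\sum_{i=1}^k |\mathcal{A}_i| > k\, l(\mathcal{F},t)$ if $k < \kappa(\mathcal{F},t)$.
   Context: All sets and families are finite. A family $\mathcal{A}$ is $t$-intersecting if $|A \cap B| \geq t$ for all $A, B \in \mathcal{A}$ with $A \neq B$. Families $\mathcal{A}_1, \dots, \mathcal{A}_k$ (not necessarily distinct or non-empty) are cross-$t$-intersecting if for all $i \neq j$, $|A \cap B| \geq t$ for every $A \in \mathcal{A}_i$ and $B \in \mathcal{A}_j$. For non-empty $\mathcal{F}$: $\alpha(\mathcal{F}) = \max\{|F| : F \in \mathcal{F}\}$; $l(\mathcal{F},t)$ is the size of a largest $t$-intersecting sub-family of $\mathcal{F}$. For a family $\mathcal{A}$, $\mathcal{A}^{t,+} = \{A \in \mathcal{A} : |A \cap B| \geq t \text{ for all } B \in \mathcal{A}\setminus\{A\}\}$ and $\mathcal{A}^{t,-} = \mathcal{A} \setminus \mathcal{A}^{t,+}$. For $\mathcal{A} \subseteq \mathcal{F}$, $\beta(\mathcal{F},t,\mathcal{A})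 = \frac{l(\mathcal{F},t) - |\mathcal{A}^{t,+}|}{|\mathcal{A}^{t,-}|}$ if $\mathcal{A}^{t,-} \neq \emptyset$, and $\frac{l(\mathcal{F},t)}{|\mathcal{F}|}$ otherwise; $\beta(\mathcal{F},t) = \min_{\mathcal{A} \subseteq \mathcal{F}} \beta(\mathcal{F},t,\mathcal{A})$ and $\kappa(\mathcal{F},t) = 1/\beta(\mathcal{F},t)$. *)

(* Defs.v *)
From mathcomp Require Import all_boot all_order all_algebra.
Set Implicit Arguments. Unset Strict Implicit. Unset Printing Implicit Defensive.
Import Order.TTheory GRing.Theory Num.Theory.

Section Defs.
Variable T : finType.

Definition t_intersecting (t : nat) (A : {set {set T}}) : bool :=
  [forall X in A, forall Y in A, (X != Y) ==> (t <= #|X :&: Y|)].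

Definition cross_t_intersecting (t k : nat) (As : 'I_k -> {set {set T}}) : Prop :=
  forall i j : 'I_k, i != j ->
    forall X Y, X \in As i -> Y \in As j -> t <= #|X :&: Y|.

(* alpha(F) = max size of a member (only used for nonempty F) *)
Definition alpha (F : {set {set T}}) : nat := \max_(X in F) #|X|.

Definition ell (F : {set {set T}}) (t : nat) : nat :=
  \max_(G : {set {set T}} | (G \subset F) && t_intersecting t G) #|G|.

Definition plus_part (t : nat) (A : {set {set T}}) : {set {set T}} :=
  [set X in A | [forall Y in A :\ X, t <= #|X :&: Y|]].

Definition minus_part (t : nat) (A : {set {set T}}) : {set {set T}} :=
  A :\: plus_part t A.

Local Open Scope ring_scope.

Definition beta_A (F : {set {set T}}) (t : nat) (A : {set {set T}}) : rat :=
  if minus_part t A != set0 then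
    ((ell F t)%:R - #|plus_part t A|%:R) / #|minus_part t A|%:R
  else (ell F t)%:R / #|F|%:R.

(* beta(F,t) = min over A subset F; the empty subfamily is a member of the
   range, so using its value as the seed of the fold gives the true minimum. *)
Definition beta (F : {set {set T}}) (t : nat) : rat :=
  \big[Order.min/beta_A F t set0]_(A : {set {set T}} | A \subset F) beta_A F t A.

(* kappa(F,t) = 1/beta(F,t), as an extended positive rational:
   None represents +infinity (the case beta(F,t) = 0). *)
Definition kappa (F : {set {set T}}) (t : nat) : option rat :=
  if beta F t == 0 then None else Some (beta F t)^-1.

Definition kappa_le_nat (F : {set {set T}}) (t k : nat) : Prop :=
  match kappa F t with
  | None => False
  | Some r => r <= k%:R
  end.

End Defs.

(* Main.v *)
Require Import Defs.
From mathcomp Require Import all_boot all_order all_algebra zify.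
Import Order.TTheory GRing.Theory Num.Theory.
Set Implicit Arguments. Unset Strict Implicit.

Section H.
Variable T : finType.
Implicit Types (A F G : {set {set T}}).

Lemma plus_sub t A : plus_part t A \subset A.
Proof. by apply/subsetP=> X; rewrite inE => /andP[]. Qed.

Lemma plus_tint t A : t_intersecting t (plus_part t A).
Proof.
apply/forall_inP=> X; rewrite inE => /andP[XA /forall_inP HX].
apply/forall_inP=> Y; rewrite inE => /andP[YA _]; apply/implyP=> nXY.
by apply: HX; rewrite !inE eq_sym nXY.
Qed.

Lemma ell_ge t F G : G \subset F -> t_intersecting t G -> #|G| <= ell F t.
Proof. by move=> h1 h2; apply: (@leq_bigmax_cond _ (fun G => (G \subset F) && t_intersecting t G)); rewrite h1. Qed.

Lemma ell_ex t F : exists2 G : {set {set T}}, (G \subset F) && t_intersecting t G & #|G| = ell F t.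
Proof.
have h : 0 < #|[pred G : {set {set T}} | (G \subset F) && t_intersecting t G]|.
  apply/card_gt0P; exists set0; rewrite inE sub0set /=.
  by apply/forall_inP=> X; rewrite inE.
have [G HG HE] := eq_bigmax_cond (fun G => #|G|) h.
by exists G => //; rewrite /ell -HE.
Qed.

Lemma minus_ex t A X : X \in minus_part t A ->
  X \in A /\ exists2 Y, Y \in A & #|X :&: Y| < t.
Proof.
rewrite /minus_part inE => /andP[np XA]; split=> //.
have : ~~ [forall Y in A :\ X, t <= #|X :&: Y|].
  by apply/negP=> h; move/negP: np; apply; rewrite inE XA.
case/forall_inPn=> Y; rewrite !inE => /andP[_ YA]; rewrite -ltnNge => h.
by exists Y.
Qed.

Local Open Scope ring_scope.

Lemma big_min_le (I : finType) (P : pred I) (f : I -> rat) x0 i :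
  P i -> \big[Order.min/x0]_(j | P j) f j <= f i.
Proof.
move=> Pi; rewrite /index_enum; have := mem_index_enum i; rewrite /index_enum.
elim: (Finite.enum I) => //= a s IH; rewrite inE big_cons => /orP[/eqP<-|].
  by rewrite Pi ge_min lexx.
move=> /IH h; case: (P a) => //; by rewrite ge_min h orbT.
Qed.

Lemma big_min_ge (I : finType) (P : pred I) (f : I -> rat) x0 c :
  c <= x0 -> (forall i, P i -> c <= f i) -> c <= \big[Order.min/x0]_(j | P j) f j.
Proof.
move=> h0 h; apply: (big_ind (fun r => c <= r)) => //.
by move=> x y hx hy; rewrite le_min hx hy.
Qed.

End H.

Lemma count_bound (T : finType) t k (As : 'I_k -> {set {set T}}) A :
  cross_t_intersecting t As -> A = \bigcup_(i < k) As i ->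
  \sum_(i < k) #|As i| <= k * #|plus_part t A| + #|minus_part t A|.
Proof.
move=> cr hA.
have e i : #|As i| = \sum_(X in A) (X \in As i : nat).
  rewrite -sum1_card big_mkcond [RHS]big_mkcond; apply: eq_bigr => X _.
  case XA: (X \in As i) => //=.
  by have -> : X \in A by rewrite hA; apply/bigcupP; exists i.
  by case: (X \in A).
rewrite (eq_bigr _ (fun i _ => e i)) exchange_big /=.
rewrite (big_setID (plus_part t A)) /=.
rewrite (setIidPr (plus_sub _ _)) -/(minus_part t A).
apply: leq_add.
  rewrite mulnC -sum_nat_const; apply: leq_sum => X _.
  rewrite -[X in _ <= X]card_ord -sum1_card; apply: leq_sum => i _; exact: leq_b1.
rewrite -sum1_card; apply: leq_sum => X XM.
have [XA [Y YA hY]] := minus_ex XM.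
move: YA; rewrite hA => /bigcupP [j _ YAj].
rewrite (bigD1 j) //= big1 ?addn0 ?leq_b1 // => i nij.
apply/eqP; rewrite eqb0; apply/negP => XAi.
have := cr i j nij X Y XAi YAj; by rewrite leqNgt hY.
Qed.

Lemma plus_key (T : finType) t (A : {set {set T}}) X Y :
  minus_part t A != set0 -> X \in plus_part t A -> Y \in A -> t <= #|X :&: Y|.
Proof.
move=> mn XP YA.
have XP' := XP; rewrite inE in XP'; case/andP: XP' => XA /forall_inP HX.
have gen : forall Z, Z \in A -> Z != X -> t <= #|X :&: Z|.
  by move=> Z ZA nZX; apply: HX; rewrite !inE nZX.
case: (eqVneq Y X) => [->|nYX]; last exact: gen.
case: (set_0Vmem (minus_part t A)) => [ZM|[Z ZM]]; first by rewrite ZM eqxx in mn.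
have ZA : Z \in A by move: ZM; rewrite inE => /andP[].
have nZX : Z != X.
  apply/eqP=> e; move: ZM; rewrite e inE XP; done.
rewrite setIid; apply: leq_trans (gen Z ZA nZX) _; exact/subset_leq_card/subsetIl.
Qed.

Section R.
Local Open Scope ring_scope.

Lemma conv (T : finType) t k (F A : {set {set T}}) :
  (0 < #|F|)%N -> A \subset F ->
  (1 <= k%:R * beta_A F t A) =
  (if minus_part t A != set0 then (k * #|plus_part t A| + #|minus_part t A| <= k * ell F t)%N
   else (#|F| <= k * ell F t)%N).
Proof.
move=> Fp AF; rewrite /beta_A.
case: ifP => mn.
  have mp : 0 < #|minus_part t A|%:R :> rat.
    by rewrite ltr0n card_gt0.
  rewrite mulrA ler_pdivlMr // mul1r mulrBr lerBrDr -!natrM -natrD ler_nat addnC //.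
by rewrite mulrA ler_pdivlMr ?ltr0n // mul1r -natrM ler_nat.
Qed.

Lemma betaA_ge0 (T : finType) t (F A : {set {set T}}) :
  A \subset F -> 0 <= beta_A F t A.
Proof.
move=> AF; rewrite /beta_A; case: ifP => _; last by rewrite divr_ge0.
rewrite divr_ge0 // subr_ge0 ler_nat; apply: ell_ge.
  exact: subset_trans (plus_sub _ _) AF.
exact: plus_tint.
Qed.

End R.

Theorem theorem1p2 (T : finType) (t k : nat) (F : {set {set T}})
  (As : 'I_k -> {set {set T}}) :
  1 <= t -> 1 <= k -> t <= alpha F ->
  (forall i, As i \subset F) ->
  cross_t_intersecting t As ->
  (forall Bs : 'I_k -> {set {set T}},
      (forall i, Bs i \subset F) -> cross_t_intersecting t Bs ->
      \sum_(i < k) #|Bs i| <= \sum_(i < k) #|As i|) ->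
  (kappa_le_nat F t k -> \sum_(i < k) #|As i| = k * ell F t) /\
  (~ kappa_le_nat F t k -> k * ell F t < \sum_(i < k) #|As i|).
Proof.
move=> t1 k1 ta sub cr maxA.
have [X0 X0F hX0] : exists2 X0, X0 \in F & t <= #|X0|.
  case: (posnP #|F|) => [F0|Fp].
    move: ta; rewrite /alpha big_pred0; last by move=> X; rewrite (card0_eq F0).
    by rewrite leqn0 => /eqP t0; rewrite t0 in t1.
  have [X0 H E] := eq_bigmax_cond (fun X : {set T} => #|X|) Fp.
  by exists X0 => //; rewrite -E.
have Fp : 0 < #|F| by apply/card_gt0P; exists X0.
have b0 : (0 <= beta F t)%R.
  apply: big_min_ge => [|A AF]; apply: betaA_ge0 => //; exact: sub0set.
have kb1 : kappa_le_nat F t k -> (1 <= k%:R * beta F t)%R.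
  rewrite /kappa_le_nat /kappa; case: eqP => // bn0.
  have bp : (0 < beta F t)%R by rewrite lt_def b0 andbT; apply/eqP.
  by rewrite -div1r ler_pdivrMr // mulrC.
have kb2 : ~ kappa_le_nat F t k -> (k%:R * beta F t < 1)%R.
  rewrite /kappa_le_nat /kappa; case: eqP => [->|bn0]; first by rewrite mulr0.
  have bp : (0 < beta F t)%R by rewrite lt_def b0 andbT; apply/eqP.
  move/negP; rewrite -ltNge -div1r ltr_pdivlMr // mulrC //.
split.
- move=> /kb1 h; apply/eqP; rewrite eqn_leq; apply/andP; split.
  + set A := \bigcup_(i < k) As i.
    have AF : A \subset F by apply/bigcupsP => i _; exact: sub.
    have bA : (beta F t <= beta_A F t A)%R by rewrite /beta; apply: big_min_le.
    have gA := le_trans h (ler_wpM2l (ler0n _ k) bA).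
    rewrite conv // in gA.
    apply: leq_trans (count_bound cr (erefl A)) _.
    move: gA; case: ifP => // /negbFE/eqP -> _.
    rewrite cards0 addn0 leq_mul2l; apply/orP; right; apply: ell_ge.
      exact: subset_trans (plus_sub _ _) AF.
    exact: plus_tint.
  + have [G' [G'F [G'int [G'big G'size]]]] : exists G' : {set {set T}},
      [/\ G' \subset F, t_intersecting t G', ell F t <= #|G'| &
          forall X, X \in G' -> t <= #|X|].
      have [G /andP[GF Gint] GE] := ell_ex t F.
      case: (leqP 2 #|G|) => hG.
        exists G; split => //; first by rewrite GE.
        move=> X XG.
        have : 0 < #|G :\ X| by move: hG; rewrite (cardsD1 X G) XG; lia.
        case/card_gt0P => Y; rewrite !inE => /andP[nYX YG].
        move/forall_inP: Gint => /(_ X XG) /forall_inP /(_ Y YG).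
        rewrite eq_sym nYX /= => h1; apply: leq_trans h1 _.
        exact/subset_leq_card/subsetIl.
      exists [set X0]; split.
      * by rewrite sub1set.
      * apply/forall_inP=> X; rewrite inE => /eqP ->.
        by apply/forall_inP=> Y; rewrite inE => /eqP ->; rewrite eqxx.
      * by rewrite -GE cards1.
      * by move=> X; rewrite inE => /eqP ->.
    have Gc : cross_t_intersecting t (fun _ : 'I_k => G').
      move=> i j _ X Y XG YG; case: (eqVneq X Y) => [<-|nXY].
        by rewrite setIid; apply: G'size.
      by move/forall_inP: G'int => /(_ X XG) /forall_inP /(_ Y YG); rewrite nXY.
    have := maxA (fun _ => G') (fun _ => G'F) Gc.
    rewrite sum_nat_const card_ord => H; apply: leq_trans H.
    by rewrite leq_mul2l G'big orbT.
- move=> /kb2 h; rewrite ltnNge; apply/negP => hle.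
  move: h; apply/negP; rewrite -leNgt.
  have kp : (0 < k%:R :> rat)%R by rewrite ltr0n.
  suff hs : (k%:R^-1 <= beta F t)%R.
    by have := @ler_pdivrMl _ k%:R (beta F t) 1 kp; rewrite mulr1 => <-.
  have goodA : forall A : {set {set T}}, A \subset F -> (k%:R^-1 <= beta_A F t A)%R.
    move=> A AF; have := @ler_pdivrMl _ k%:R (beta_A F t A) 1 kp; rewrite mulr1 => ->; rewrite conv //.
    clear kb1 kb2; case: k k1 As sub cr maxA hle kp => // k _ As sub cr maxA hle _.
    case: ifP => mn.
    * pose Bs := fun i : 'I_k.+1 => if i == ord0 then A else plus_part t A.
      have BF : forall i, Bs i \subset F.
        move=> i; rewrite /Bs; case: ifP => // _.
        exact: subset_trans (plus_sub _ _) AF.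
      have Bc : cross_t_intersecting t Bs.
        move=> i j nij X Y; rewrite /Bs.
        case: (eqVneq i ord0) => [ei|ni].
          case: (eqVneq j ord0) => [ej|nj]; first by rewrite ei ej eqxx in nij.
          move=> XA YP; rewrite setIC; apply: plus_key mn YP XA.
        move=> XP YB; apply: plus_key mn XP _.
        by case: (j == ord0) YB => // /(subsetP (plus_sub _ _)).
      have := maxA Bs BF Bc; rewrite big_ord_recl /Bs eqxx.
      under eq_bigr => i _ do rewrite eq_sym (negbTE (neq_lift ord0 i)).
      rewrite sum_nat_const card_ord => H1.
      apply: leq_trans hle; apply: leq_trans H1.
      rewrite -(cardsID (plus_part t A) A) (setIidPr (plus_sub _ _)) -/(minus_part t A).
      lia.
    * pose Bs := fun i : 'I_k.+1 => if i == ord0 then F else set0.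
      have BF : forall i, Bs i \subset F.
        by move=> i; rewrite /Bs; case: ifP => // _; exact: sub0set.
      have Bc : cross_t_intersecting t Bs.
        move=> i j nij X Y; rewrite /Bs.
        case: (eqVneq i ord0) => [ei|ni]; last by rewrite in_set0.
        case: (eqVneq j ord0) => [ej|nj]; first by rewrite ei ej eqxx in nij.
        by rewrite in_set0.
      have := maxA Bs BF Bc; rewrite big_ord_recl /Bs eqxx.
      under eq_bigr => i _ do rewrite eq_sym (negbTE (neq_lift ord0 i)).
      rewrite sum_nat_const card_ord cards0 muln0 addn0 => H1.
      exact: leq_trans H1 hle.
  apply: big_min_ge => [|A AF]; apply: goodA => //; exact: sub0set.
Qed.
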